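(* Let $R>0$ and $\phi\in C_c^\infty(\mathbb R)$ be non-negative and even with $\mathrm{supp}(\phi)=[-R,R]$ and $\phi>0$ on $(-R,R)$; let $\psi(x)=\int_{-\infty}^xy\phi(y)\,dy$. Let $N\in\mathbb N$, weights $\omega^i\in[0,1]$ with $\sum_i\omega^i=1$, and $x_0^i\in\mathbb R$ with $\sup_{i,j}|x_0^i-x_0^j|<R$. For $i=1,\dots,N$ let $x^i$ be the unique global solutions of $$\frac{d}{dt}x^i=-\sum_{j=1}^N\omega^j\psi'(x^i-x^j),\qquad x^i(0)=x_0^i.$$ Then there exists a constant $K>0$ depending only on $\psi$ such that $|x^i(t)-x^j(t)|\ge|x_0^i-x_0^j|e^{-Kt}$ for all $i,j=1,\dots,N$ and all $t>0$. *)

(* Defs.v *)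
From Stdlib Require Import Reals List.
From Coquelicot Require Import Coquelicot.
Open Scope R_scope.

Definition smooth (f : R -> R) : Prop :=
  forall (n : nat) (x : R), ex_derive (Derive_n f n) x.

Definition psi_of (phi : R -> R) (x : R) : R :=
  RInt_gen (fun y => y * phi y) (Rbar_locally m_infty) (at_point x).

Definition sumN (N : nat) (f : nat -> R) : R :=
  fold_right Rplus 0 (map f (seq 0 N)).

(* Main.v *)
Require Import Defs.
From Stdlib Require Import Reals List Lra Psatz.
From Coquelicot Require Import Coquelicot.
Open Scope R_scope.

Lemma phi_cont phi : smooth phi -> forall x, continuous phi x.
Proof. intros H x. apply (@ex_derive_continuous R_AbsRing R_NormedModule). exact (H 0%nat x). Qed.

Lemma dphi_cont phi : smooth phi -> forall x, continuous (Derive phi) x.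
Proof. intros H x. apply (@ex_derive_continuous R_AbsRing R_NormedModule). exact (H 1%nat x). Qed.

Lemma g_lip (Rr : R) phi : 0 < Rr -> smooth phi -> (forall x, Rr <= Rabs x -> phi x = 0) ->
  exists L, 0 <= L /\ forall a b, Rabs (a * phi a - b * phi b) <= L * Rabs (a - b).
Proof.
  intros HR Hs H0.
  set (dg := fun z => phi z + z * Derive phi z).
  assert (Hd : forall z, is_derive (fun z => z * phi z) z (dg z)).
  { intros z. unfold dg. auto_derive. exact (Hs 0%nat z). rewrite !Rmult_1_l. reflexivity. }
  assert (Hdc : forall z, continuous dg z).
  { intros z. unfold dg. apply (continuous_plus phi).
    now apply phi_cont.
    apply (continuous_mult (fun y => y) (Derive phi)). apply continuous_id. now apply dphi_cont. }
  destruct (continuity_ab_maj (fun z => Rabs (dg z)) (-Rr-1) (Rr+1)) as [Mx [HM _]].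
  lra.
  { intros c _. apply continuity_pt_filterlim.
    apply (continuous_comp dg Rabs). apply Hdc. apply continuous_Rabs. }
  assert (Hb : forall z, Rabs (dg z) <= Rabs (dg Mx)).
  { intros z. destruct (Rle_dec (Rabs z) (Rr+1)) as [Hz|Hz].
    - apply HM. apply Rabs_le_between in Hz. lra.
    - assert (Hl : locally z (fun t => phi t = 0)).
      { exists (mkposreal 1 Rlt_0_1). intros y Hy. apply H0.
        change (Rabs (y - z) < 1) in Hy.
        change R in y. rewrite Rabs_minus_sym in Hy.
        pose proof (Rabs_triang_inv z (z - y)). replace (z - (z - y)) with y in H by ring.
        lra. }
      assert (Derive phi z = 0).
      { rewrite (Derive_ext_loc phi (fun _ => 0) z Hl). apply Derive_const. }
      unfold dg. rewrite H. rewrite (locally_singleton _ _ Hl).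
      replace (0 + z * 0) with 0 by ring. rewrite Rabs_R0. apply Rabs_pos. }
  exists (Rabs (dg Mx)). split. apply Rabs_pos.
  intros a b.
  destruct (MVT_gen (fun z => z * phi z) b a dg) as [c [_ Hc]].
  - intros; apply Hd.
  - intros; apply continuity_pt_filterlim.
    apply (@ex_derive_continuous R_AbsRing R_NormedModule (fun z => z * phi z) x). eexists; apply Hd.
  - rewrite Hc. rewrite Rabs_mult. apply Rmult_le_compat_r. apply Rabs_pos. apply Hb.
Qed.

Lemma sum_bound (l : list nat) (w u v : nat -> R) (B : R) :
  (forall k, In k l -> 0 <= w k) -> (forall k, In k l -> Rabs (u k - v k) <= B) ->
  Rabs (fold_right Rplus 0 (map (fun k => w k * u k) l) - fold_right Rplus 0 (map (fun k => w k * v k) l))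
  <= B * fold_right Rplus 0 (map w l).
Proof.
  induction l as [|a l IH]; intros Hw Hu; simpl.
  - rewrite Rminus_0_r, Rabs_R0. lra.
  - replace (w a * u a + fold_right Rplus 0 (map (fun k => w k * u k) l) -
      (w a * v a + fold_right Rplus 0 (map (fun k => w k * v k) l))) with
      (w a * (u a - v a) + (fold_right Rplus 0 (map (fun k => w k * u k) l) -
       fold_right Rplus 0 (map (fun k => w k * v k) l))) by ring.
    eapply Rle_trans. apply Rabs_triang.
    rewrite Rabs_mult, (Rabs_pos_eq (w a)) by (apply Hw; simpl; auto).
    assert (0 <= w a) by (apply Hw; simpl; auto).
    assert (Rabs (u a - v a) <= B) by (apply Hu; simpl; auto).
    assert (IH' := IH (fun k Hk => Hw k (or_intror Hk)) (fun k Hk => Hu k (or_intror Hk))).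
    rewrite Rmult_plus_distr_l. apply Rplus_le_compat; [|exact IH'].
    rewrite (Rmult_comm B). apply Rmult_le_compat_l; auto.
Qed.
Lemma psi_eq (Rr : R) phi : 0 < Rr -> smooth phi -> (forall x, Rr <= Rabs x -> phi x = 0) ->
  forall z, psi_of phi z = RInt (fun y => y * phi y) (-Rr) z.
Proof.
  intros HR Hs H0 z.
  assert (Hc : forall y, continuous (fun y => y * phi y) y).
  { intros y. apply (continuous_mult (fun y => y) phi). apply continuous_id. now apply phi_cont. }
  unfold psi_of. apply is_RInt_gen_unique.
  replace (RInt (fun y => y * phi y) (-Rr) z) with (plus zero (RInt (fun y => y * phi y) (-Rr) z))
    by apply plus_zero_l.
  apply (@is_RInt_gen_Chasles R_NormedModule) with (-Rr); try apply Rbar_locally_filter; try apply at_point_filter.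
  - intros P HP. simpl.
    apply Filter_prod with (fun a => a < -Rr) (fun b => b = -Rr).
    + exists (-Rr). tauto.
    + reflexivity.
    + intros a b Ha Hb. simpl. subst b. exists zero. split.
      * apply is_RInt_ext with (fun _ => 0).
        { intros x Hx. rewrite Rmin_left in Hx by lra. rewrite Rmax_right in Hx by lra.
          rewrite H0. rewrite Rmult_0_r. reflexivity. rewrite Rabs_left by lra. lra. }
        replace (zero : R) with (scal (-Rr - a) 0) by (apply (@scal_zero_r R_AbsRing R_NormedModule)).
        apply (@is_RInt_const R_NormedModule).
      * apply locally_singleton. exact HP.
  - apply is_RInt_gen_at_point. apply (@RInt_correct R_CompleteNormedModule). apply (@ex_RInt_continuous R_CompleteNormedModule).
    intros; apply Hc.
Qed.

Lemma dpsi (Rr : R) phi : 0 < Rr -> smooth phi -> (forall x, Rr <= Rabs x -> phi x = 0) ->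
  forall z, Derive (psi_of phi) z = z * phi z.
Proof.
  intros HR Hs H0 z.
  rewrite (Derive_ext _ (fun z => RInt (fun y => y * phi y) (-Rr) z)) by (apply psi_eq; auto).
  apply is_derive_unique.
  apply (@is_derive_RInt R_CompleteNormedModule (fun y => y * phi y) _ (-Rr)).
  - apply filter_forall. intros b. apply (@RInt_correct R_CompleteNormedModule). apply (@ex_RInt_continuous R_CompleteNormedModule).
    intros; apply (continuous_mult (fun y => y) phi). apply continuous_id. now apply phi_cont.
  - apply (continuous_mult (fun y => y) phi). apply continuous_id. now apply phi_cont.
Qed.

Theorem lemma4p25 :
  forall (Rr : R) (phi : R -> R),
    0 < Rr ->
    smooth phi ->
    (forall x, 0 <= phi x) ->
    (forall x, phi (- x) = phi x) ->
    (forall x, Rr <= Rabs x -> phi x = 0) ->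
    (forall x, Rabs x < Rr -> 0 < phi x) ->
    exists K : R, 0 < K /\
      forall (N : nat) (w : nat -> R) (x0 : nat -> R) (x : nat -> R -> R),
        (forall i, (i < N)%nat -> 0 <= w i <= 1) ->
        sumN N w = 1 ->
        (forall i j, (i < N)%nat -> (j < N)%nat -> Rabs (x0 i - x0 j) < Rr) ->
        (forall i, (i < N)%nat -> x i 0 = x0 i) ->
        (forall i, (i < N)%nat -> forall t : R,
            is_derive (x i) t
              (- sumN N (fun j => w j * Derive (psi_of phi) (x i t - x j t)))) ->
        forall i j, (i < N)%nat -> (j < N)%nat -> forall t : R, 0 < t ->
          Rabs (x0 i - x0 j) * exp (- K * t) <= Rabs (x i t - x j t).
Proof.
  intros Rr phi HR Hs Hpos Hev H0 Hp.
  destruct (g_lip Rr phi HR Hs H0) as [L [HL Hlip]].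
  exists (L + 1). split. lra.
  intros N w x0 x Hw Hsw _ Hinit Hder i j Hi Hj t Ht.
  set (K := L + 1).
  set (d := fun s => x i s - x j s).
  set (S := fun a s => sumN N (fun k => w k * Derive (psi_of phi) (x a s - x k s))).
  set (D := fun s => - S i s - - S j s).
  assert (Hdd : forall s, is_derive d s (D s)).
  { intros s. apply (@is_derive_minus R_AbsRing R_NormedModule); apply Hder; auto. }
  assert (HD : forall s, Rabs (D s) <= L * Rabs (d s)).
  { intros s. unfold D. replace (- S i s - - S j s) with (- (S i s - S j s)) by ring.
    rewrite Rabs_Ropp. unfold S, sumN.
    replace (L * Rabs (d s)) with (L * Rabs (d s) * fold_right Rplus 0 (map w (seq 0 N))).
    2:{ change (fold_right Rplus 0 (map w (seq 0 N))) with (sumN N w). rewrite Hsw. ring. }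
    apply sum_bound.
    - intros k Hk. apply in_seq in Hk. apply Hw. lia.
    - intros k _. rewrite !(dpsi Rr phi HR Hs H0).
      eapply Rle_trans. apply Hlip. unfold d. right. f_equal. f_equal. ring. }
  set (f := fun s => d s * d s * exp (2 * K * s)).
  set (df := fun s => (D s * d s + d s * D s) * exp (2 * K * s) + d s * d s * (2 * K * exp (2 * K * s))).
  assert (Hf : forall s, is_derive f s (df s)).
  { intros s. unfold f, df.
    apply (@is_derive_mult R_AbsRing (fun s => d s * d s) (fun s => exp (2 * K * s))).
    apply (@is_derive_mult R_AbsRing d d); [apply Hdd|apply Hdd|].
    intros; simpl; apply Rmult_comm.
    auto_derive. auto. simpl. ring. intros; simpl; apply Rmult_comm. }
  assert (Hf0 : f 0 <= f t).
  { destruct (MVT_gen f 0 t df) as [c [_ Hc]].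
    - intros; apply Hf.
    - intros; apply continuity_pt_filterlim.
      apply (@ex_derive_continuous R_AbsRing R_NormedModule f x1). eexists; apply Hf.
    - assert (0 <= df c).
      { unfold df. pose proof (exp_pos (2 * K * c)). pose proof (HD c).
        pose proof (Rabs_pos (d c)). pose proof (Rabs_pos (D c)).
        assert (- (Rabs (d c) * Rabs (D c)) <= d c * D c).
        { rewrite <- Rabs_mult. pose proof (Rabs_le_between (d c * D c) (Rabs (d c * D c))).
          pose proof (Rle_refl (Rabs (d c * D c))). tauto. }
        assert (Rabs (d c) * Rabs (D c) <= K * (d c * d c)).
        { replace (d c * d c) with (Rabs (d c) * Rabs (d c)).
          2:{ rewrite <- Rabs_mult. apply Rabs_pos_eq. nra. }
          unfold K. nra. }
        assert (0 <= D c * d c + d c * D c + d c * d c * (2 * K)) by nra.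
        nra. }
      nra. }
  unfold f in Hf0. rewrite Rmult_0_r, exp_0, Rmult_1_r in Hf0.
  unfold d in Hf0. rewrite !Hinit in Hf0 by auto.
  fold (d t) in Hf0.
  assert (He : exp (- K * t) * exp (- K * t) * exp (2 * K * t) = 1).
  { rewrite <- !exp_plus. replace (- K * t + - K * t + 2 * K * t) with 0 by ring. apply exp_0. }
  rewrite <- (Rabs_pos_eq (Rabs (x0 i - x0 j) * exp (- K * t))).
  2:{ pose proof (exp_pos (- K * t)). pose proof (Rabs_pos (x0 i - x0 j)). nra. }
  fold (d t). apply Rsqr_le_abs_0. unfold Rsqr.
  pose proof (exp_pos (- K * t)). pose proof (exp_pos (2 * K * t)).
  replace (Rabs (x0 i - x0 j) * exp (- K * t) * (Rabs (x0 i - x0 j) * exp (- K * t)))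
    with ((x0 i - x0 j) * (x0 i - x0 j) * (exp (- K * t) * exp (- K * t))).
  2:{ assert (Ha: Rabs (x0 i - x0 j) * Rabs (x0 i - x0 j) = (x0 i - x0 j) * (x0 i - x0 j))
        by (rewrite <- Rabs_mult; apply Rabs_pos_eq; apply Rle_0_sqr).
      transitivity (Rabs (x0 i - x0 j) * Rabs (x0 i - x0 j) * (exp (-K*t) * exp (-K*t))).
      rewrite Ha; ring. ring. }
  replace (d t * d t) with (d t * d t * exp (2 * K * t) * (exp (- K * t) * exp (- K * t))).
  2:{ transitivity (d t * d t * (exp (- K * t) * exp (- K * t) * exp (2 * K * t))). ring. rewrite He; ring. }
  apply Rmult_le_compat_r. nra. exact Hf0.
Qed.
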